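(* The set $\bigcup_{p=0}^\infty Y_p$ is dense in $\mathbb R$, where $Y_p=\{z\in\mathbb C:\psi^{\circ p}(z)=0\}$ (so $Y_0=\{0\}$, $Y_1=\{-1,1\}$, $Y_2=\{(\pm1\pm\sqrt5)/2\}$, ...). Each $Y_p$ consists of $2^p$ real numbers.
   Context: $\psi(z)=z-1/z$, viewed as a rational map of the Riemann sphere, and $\psi^{\circ p}$ is its $p$-fold composition ($\psi^{\circ0}(z)=z$). *)

(* Defs.v *)
From HB Require Import structures.
From mathcomp Require Import all_boot all_order all_algebra.
From mathcomp Require Import all_classical all_reals all_analysis.
From mathcomp Require Import complex.
Set Implicit Arguments. Unset Strict Implicit. Unset Printing Implicit Defensive.
Import Order.TTheory GRing.Theory Num.Theory.
Local Open Scope ring_scope.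

(* The Riemann sphere over C = R[i] is modelled as [option R[i]],
   with [None] the point at infinity. *)
Definition psi {R : rcfType} (w : option R[i]) : option R[i] :=
  match w with
  | None => None
  | Some z => if z == 0 then None
              else Some (z - z^-1)
  end.

Definition psi_iter {R : rcfType} (p : nat) (w : option R[i]) : option R[i] :=
  iter p psi w.

Definition Y {R : rcfType} (p : nat) : R[i] -> Prop :=
  fun z => psi_iter p (Some z) = Some 0.

(* Main.v *)
Require Import Defs.
From HB Require Import structures.
From mathcomp Require Import all_boot all_order all_algebra.
From mathcomp Require Import all_classical all_reals all_analysis.
From mathcomp Require Import complex.
From mathcomp Require Import ring lra.
Import Order.TTheory GRing.Theory Num.Theory numFieldNormedType.Exports.
Local Open Scope ring_scope.
Local Open Scope classical_set_scope.

Section Helpers.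
Variable R : realType.

Lemma psi_iterSr (p : nat) (w : option R[i]) : psi_iter p.+1 w = psi_iter p (psi w).
Proof. by rewrite /psi_iter iterSr. Qed.

Lemma psi_iterNone (p : nat) : psi_iter p (None : option R[i]) = None.
Proof. by elim: p => //= p; rewrite /psi_iter /= => ->. Qed.

Lemma YS p (z : R[i]) : Y p.+1 z <-> z != 0 /\ Y p (z - z^-1).
Proof.
rewrite /Y psi_iterSr /=; case: eqP => [_|/eqP z0] /=.
  by rewrite psi_iterNone; split => // -[].
by split => [->|[]].
Qed.

Definition r1 (y : R) := (y + Num.sqrt (y ^+ 2 + 4)) / 2.
Definition r2 (y : R) := (y - Num.sqrt (y ^+ 2 + 4)) / 2.

Lemma sqrt_gt (y : R) : `|y| < Num.sqrt (y ^+ 2 + 4).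
Proof.
rewrite -(@ltr_pXn2r _ 2) ?nnegrE ?sqrtr_ge0 //.
by rewrite sqr_sqrtr ?real_normK ?num_real // ?ltrDl ?addr_ge0 ?sqr_ge0.
Qed.

Lemma r1_gt0 y : 0 < r1 y.
Proof.
have := sqrt_gt y; have := ler_norm y; have := ler_normr y; rewrite /r1.
case: (lerP 0 y) => H; [|];
  rewrite ?(ger0_norm H) ?(ltr0_norm H) => *; apply: divr_gt0 => //; lra.
Qed.

Lemma r2_lt0 y : r2 y < 0.
Proof.
have := sqrt_gt y; rewrite /r2.
case: (lerP 0 y) => H; rewrite ?(ger0_norm H) ?(ltr0_norm H) => *;
 rewrite pmulr_llt0 //; lra.
Qed.

Lemma r12_sum y : r1 y + r2 y = y.
Proof. by rewrite /r1 /r2; field. Qed.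
Lemma r12_prod y : r1 y * r2 y = -1.
Proof.
rewrite /r1 /r2.
have -> : (y + Num.sqrt (y ^+ 2 + 4)) / 2 * ((y - Num.sqrt (y ^+ 2 + 4)) / 2)
  = (y ^+ 2 - Num.sqrt (y ^+ 2 + 4) ^+ 2) / 4 by field.
rewrite sqr_sqrtr; last by rewrite addr_ge0 ?sqr_ge0.
by field.
Qed.

Lemma r_psi (r y : R) : r * (r - y) = 1 -> r != 0 /\ r - r^-1 = y.
Proof.
move=> H; have r0 : r != 0 by apply/eqP => r0; move: H; rewrite r0 mul0r => /eqP; rewrite eq_sym oner_eq0.
split => //; have -> : r^-1 = r - y by apply: (mulfI r0); rewrite H mulfV.
ring.
Qed.

Lemma r1_psi y : r1 y - (r1 y)^-1 = y.
Proof.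
have H : r1 y * (r1 y - y) = 1.
  have G : forall a b : R, a + b = y -> a * b = -1 -> a * (a - y) = 1.
    by move=> a b <- P; rewrite -[1]opprK -P; ring.
  exact: G (r12_sum y) (r12_prod y).
by have [] := r_psi _ _ H.
Qed.
Lemma r2_psi y : r2 y - (r2 y)^-1 = y.
Proof.
have H : r2 y * (r2 y - y) = 1.
  have G : forall a b : R, a + b = y -> a * b = -1 -> b * (b - y) = 1.
    by move=> a b <- P; rewrite -[1]opprK -P; ring.
  exact: G (r12_sum y) (r12_prod y).
by have [] := r_psi _ _ H.
Qed.

Lemma preimC (y : R) (z : R[i]) :
  (z != 0 /\ z - z^-1 = (y%:C)%C) <-> (z = ((r1 y)%:C)%C \/ z = ((r2 y)%:C)%C).
Proof.
split.
  move=> [z0 H].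
  have E : (z - ((r1 y)%:C)%C) * (z - ((r2 y)%:C)%C) = 0.
    have G : forall a b : R, (z - (a%:C)%C) * (z - (b%:C)%C)
        = z * z - ((a + b)%:C)%C * z + ((a * b)%:C)%C.
      by move=> a b; rewrite rmorphD rmorphM /=; ring.
    rewrite G.
    rewrite r12_sum r12_prod rmorphN rmorph1 -H.
    by field.
  move/eqP: E; rewrite mulf_eq0 !subr_eq0 => /orP[/eqP|/eqP]; tauto.
have key : forall r : R, r != 0 -> r - r^-1 = y -> (r%:C)%C != 0 /\ (r%:C)%C - (r%:C)%C^-1 = (y%:C)%C.
  move=> r r0 <-; split; first by rewrite (inj_eq (@complexI R)).
  by rewrite rmorphB /= fmorphV.
case=> ->; apply: key; rewrite ?r1_psi ?r2_psi //.
  exact: lt0r_neq0 (r1_gt0 y).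
exact: ltr0_neq0 (r2_lt0 y).
Qed.

Fixpoint seqY (p : nat) : seq R :=
  if p is p'.+1 then map r1 (seqY p') ++ map r2 (seqY p') else [:: 0].

Lemma r1_inj : injective r1.
Proof. by move=> a b E; rewrite -(r1_psi a) -(r1_psi b) E. Qed.
Lemma r2_inj : injective r2.
Proof. by move=> a b E; rewrite -(r2_psi a) -(r2_psi b) E. Qed.

Lemma seqY_spec p : uniq (seqY p) /\ size (seqY p) = (2 ^ p)%N /\ (forall z : R[i], Y p z <-> exists2 x, x \in seqY p & z = (x%:C)%C).
Proof.
elim: p => [|p [U [S H]]].
  split => //; split => // z; rewrite /Y /psi_iter /=; split.
    by case=> ->; exists 0; rewrite ?inE.
  by case=> x; rewrite inE => /eqP -> ->.
split.
  rewrite /= cat_uniq !map_inj_uniq ?U //=; [|exact: r2_inj|exact: r1_inj].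
  rewrite andbT; apply/hasPn => x /mapP[a _ ->]; apply/mapP => -[b _ E].
  by have := r1_gt0 b; have := r2_lt0 a; rewrite E; lra.
split; first by rewrite /= size_cat !size_map S expnS mul2n addnn.
move=> z; rewrite YS; split.
  case=> z0 /H [y ys E].
  have [] := (preimC y z).1 (conj z0 E) => ->.
    by exists (r1 y) => //; rewrite mem_cat map_f.
  by exists (r2 y) => //; rewrite mem_cat map_f ?orbT.
case=> x; rewrite mem_cat => /orP[] /mapP[y ys ->] ->.
  have [] := (preimC y ((r1 y)%:C)%C).2 (or_introl erefl) => z0 E.
  by split => //; apply/H; exists y.
have [] := (preimC y ((r2 y)%:C)%C).2 (or_intror erefl) => z0 E.
by split => //; apply/H; exists y.
Qed.
Lemma archi_nat (x : R) : exists k : nat, x < k%:R.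
Proof.
exists (Num.bound `|x|)%N; apply: le_lt_trans (ler_norm x) _.
exact: archi_boundP.
Qed.

Lemma no_escape (P L : nat -> R) : (forall n, 0 < P n) -> (forall n, 0 < L n) ->
  (forall n, L n.+1 = L n * (1 + (P n)^-1)) ->
  (forall n, P n.+1 = P n - 2 - (L n ^+ 2 - 1) / P n) -> False.
Proof.
move=> Pp Lp HL HP.
have Lup n : L n <= L n.+1.
  rewrite HL; have := Lp n; have : 0 < (P n)^-1 by rewrite invr_gt0. nra.
have Lmono n m : (n <= m)%N -> L n <= L m.
  move=> /subnK <-; elim: (m - n)%N => // k IH; rewrite addSn.
  exact: le_trans IH (Lup _).
have Pdec1 n : 1 <= P n -> P n.+1 <= P n - 1.
  move=> H; rewrite HP.
  have : (L n ^+ 2 - 1) / P n >= - 1.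
    rewrite mulrBl mul1r. 
    have : 0 <= L n ^+ 2 / P n by rewrite divr_ge0 ?sqr_ge0 ?ltW.
    have : (P n)^-1 <= 1 by rewrite invr_le1 ?unitf_gt0.
    lra.
  lra.
have often N : exists2 m, (N <= m)%N & P m < 1.
  case: (pselect (exists2 m, (N <= m)%N & P m < 1)) => // Hn; exfalso.
  have Hk k : P (k + N)%N <= P N - k%:R.
    elim: k => [|k IH]; first by rewrite add0n subr0.
    have Hge : 1 <= P (k + N)%N.
      by rewrite leNgt; apply/negP => Hlt; by apply: Hn; exists (k + N)%N; rewrite ?leq_addl.
    rewrite addSn; apply: le_trans (Pdec1 _ Hge) _; rewrite -natr1; lra.
  have [k Hk'] := archi_nat (P N).
  have := Hk k; have := Pp (k + N)%N; lra.
have grow j : exists n, j%:R * L 0%N <= L n.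
  elim: j => [|j [n Hn]]; first by exists 0%N; rewrite mul0r ltW.
  have [m nm Pm] := often n.
  exists m.+1; rewrite HL -natr1 mulrDl mul1r mulrDr mulr1.
  have : L 0%N <= L m by apply: Lmono.
  have : L n <= L m by apply: Lmono.
  have : L m <= L m / P m.
    by rewrite ler_pdivlMr // ger_pMr // ltW.
  lra.
have [n Ln] : exists n, 1 <= L n.
  have [k Hk] := archi_nat (L 0%N)^-1.
  have [n Hn] := grow k; exists n; apply: le_trans Hn.
  by rewrite -ler_pdivrMr // div1r ltW.
have Hk k : P (k + n)%N <= P n - k%:R.
  elim: k => [|k IH]; first by rewrite add0n subr0.
  have Lk : 1 <= L (k + n)%N by apply: le_trans Ln (Lmono _ _ _); rewrite leq_addl.
  rewrite addSn HP -natr1.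
  have : 0 <= (L (k + n)%N ^+ 2 - 1) / P (k + n)%N.
    apply: divr_ge0; last exact: ltW (Pp _). nra.
  lra.
have [k Hk'] := archi_nat (P n).
have := Hk k; have := Pp (k + n)%N; lra.
Qed.

Definition f (x : R) := x - x^-1.

Lemma f_mono (x x' : R) : 0 < x * x' -> x < x' -> f x < f x'.
Proof.
move=> Hp Hlt.
have x0 : x != 0 by apply/eqP => e; move: Hp; rewrite e mul0r ltxx.
have x0' : x' != 0 by apply/eqP => e; move: Hp; rewrite e mulr0 ltxx.
have E : f x' - f x = (x' - x) * (1 + (x * x')^-1).
  by rewrite /f; field; rewrite x0 x0'.
rewrite -subr_gt0 E; apply: mulr_gt0; first by rewrite subr_gt0.
by have := invr_gt0 (x * x'); rewrite Hp => /= H; lra.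
Qed.

Lemma posprod (A B : R) : A < B -> ~ (A <= 0 <= B) -> 0 < A * B.
Proof.
move=> AB H; case: (lerP A 0) => HA.
  case: (lerP 0 B) => HB; first by exfalso; apply: H; rewrite HA HB.
  by rewrite nmulr_rgt0 //; lra.
by rewrite pmulr_rgt0 //; lra.
Qed.

Lemma stepL (A B : R) : 0 < A * B ->
  f B - f A = (B - A) * (1 + (A * B)^-1).
Proof.
move=> Hp.
have x0 : A != 0 by apply/eqP => e; move: Hp; rewrite e mul0r ltxx.
have x0' : B != 0 by apply/eqP => e; move: Hp; rewrite e mulr0 ltxx.
by rewrite /f; field; rewrite ?x0 ?x0'.
Qed.

Lemma stepP (A B : R) : 0 < A * B ->
  f A * f B = A * B - 2 - ((B - A) ^+ 2 - 1) / (A * B).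
Proof.
move=> Hp.
have x0 : A != 0 by apply/eqP => e; move: Hp; rewrite e mul0r ltxx.
have x0' : B != 0 by apply/eqP => e; move: Hp; rewrite e mulr0 ltxx.
by rewrite /f; field; rewrite ?x0 ?x0'.
Qed.

Lemma find_point (a b : R) : a < b ->
  exists p, exists2 x, a <= x <= b & Y p ((x%:C)%C).
Proof.
move=> ab.
pose A n := iter n f a; pose B n := iter n f b.
have [[n0 Hn0]|Hno] := pselect (exists n, A n <= 0 <= B n); last first.
  exfalso.
  have Hno' n : ~ (A n <= 0 <= B n) by move=> H; apply: Hno; exists n.
  have AB n : A n < B n.
    elim: n => // n IH.
    have Pp := posprod _ _ IH (Hno' n).
    rewrite -subr_gt0 /A /B /= -/(A n) -/(B n) stepL //.
    apply: mulr_gt0; first by rewrite subr_gt0.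
    by have := invr_gt0 (A n * B n); rewrite Pp => /= H; lra.
  apply: (@no_escape (fun n => A n * B n) (fun n => B n - A n)).
  - by move=> n; apply: posprod _ _ (AB n) (Hno' n).
  - by move=> n; rewrite subr_gt0.
  - by move=> n; rewrite /A /B /= -/(A n) -/(B n) stepL // (posprod _ _ (AB n) (Hno' n)).
  - by move=> n; rewrite /A /B /= -/(A n) -/(B n) stepP // (posprod _ _ (AB n) (Hno' n)).
have exP : exists n, (A n <= 0) && (0 <= B n) by exists n0.
case: (ex_minnP exP) => n /andP[Hn1 Hn2] Hmin.
have Hno' k : (k < n)%N -> ~ (A k <= 0 <= B k).
  by move=> kn H; have := Hmin k H; rewrite leqNgt kn.
have AB k : (k <= n)%N -> A k < B k.
  elim: k => // k IH kn.
  have kn' : (k < n)%N by [].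
  have Hk := IH (ltnW kn').
  have Pp := posprod _ _ Hk (Hno' k kn').
  rewrite -subr_gt0 /A /B /= -/(A k) -/(B k) stepL //.
  apply: mulr_gt0; first by rewrite subr_gt0.
  by have := invr_gt0 (A k * B k); rewrite Pp => /= H; lra.
have claim k : (k <= n)%N -> forall y, A k <= y <= B k ->
    exists2 x, a <= x <= b & psi_iter k (Some ((x%:C)%C)) = Some ((y%:C)%C).
  elim: k => [_ y Hy|k IH kn y /andP[Hy1 Hy2]]; first by exists y.
  have kn' : (k < n)%N by [].
  have Hk := AB k (ltnW kn').
  have Pp := posprod _ _ Hk (Hno' k kn').
  have E1 : A k.+1 = f (A k) by [].
  have E2 : B k.+1 = f (B k) by [].
  rewrite E1 in Hy1; rewrite E2 in Hy2.
  have [w [[Hw1 Hw2] fw]] : exists w, (A k <= w <= B k /\ w != 0) /\ f w = y.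
    case: (lerP (A k) 0) => HA.
      have HB : B k < 0.
        by rewrite ltNge; apply/negP => HB; apply: (Hno' k kn'); rewrite HA HB.
      have fw : f (r2 y) = y by rewrite /f r2_psi.
      exists (r2 y); split => //.
      have w0 := r2_lt0 y.
      split; last exact: ltr0_neq0.
      apply/andP; split; rewrite leNgt; apply/negP => Hlt.
        have hp : 0 < r2 y * A k by nra.
        have := f_mono _ _ hp Hlt; rewrite fw; lra.
      have hp : 0 < B k * r2 y by nra.
      have := f_mono _ _ hp Hlt; rewrite fw; lra.
    have HB : 0 < B k by lra.
    have fw : f (r1 y) = y by rewrite /f r1_psi.
    exists (r1 y); split => //.
    have w0 := r1_gt0 y.
    split; last exact: lt0r_neq0.
    apply/andP; split; rewrite leNgt; apply/negP => Hlt.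
      have hp : 0 < r1 y * A k by nra.
      have := f_mono _ _ hp Hlt; rewrite fw; lra.
    have hp : 0 < B k * r1 y by nra.
    have := f_mono _ _ hp Hlt; rewrite fw; lra.
  have [x Hx Ex] := IH (ltnW kn') w Hw1.
  exists x => //.
  rewrite /psi_iter iterS -/(psi_iter k _) Ex /=.
  have wC : (w%:C)%C != 0 :> R[i] by rewrite (inj_eq (@complexI R)).
  rewrite (negbTE wC); congr Some.
  by rewrite -fw /f rmorphB /= fmorphV.
have [x Hx Ex] := claim n (leqnn n) 0 (introT andP (conj Hn1 Hn2)).
by exists n, x => //; rewrite /Y Ex.
Qed.
End Helpers.

Theorem proposition3p2 (R : realType) :
  dense [set x : R | exists p : nat, Y p (x%:C)%C]
  /\ (forall p : nat, exists s : seq R,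
        uniq s /\ size s = (2 ^ p)%N /\
        (forall z : R[i], Y p z <-> exists2 x, x \in s & z = (x%:C)%C)).
Proof.
split; last by move=> p; exists (@seqY R p); exact: (@seqY_spec R p).
move=> O [r Or]; rewrite openE => /(_ _ Or)/nbhs_ballP[_/posnumP[e] reO].
have rb : r < r + e%:num / 2 by rewrite ltrDl divr_gt0.
have [p [x /andP[Hx1 Hx2] Yx]] := @find_point R _ _ rb.
exists x; split; last by exists p.
apply: reO; rewrite /ball /= distrC ltr_distl.
have := gt0 e; lra.
Qed.
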